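(* Let $\mathcal{A}$ be a complete rpoNFA. Then $L(\mathcal{A})$ is $\mathrm{depth}(\mathcal{A})$-$\mathcal{R}$-trivial.
   Context: An NFA $\mathcal{A}=(Q,\Sigma,\cdot,I,F)$ with $\cdot:Q\times\Sigma\to 2^Q$ is complete if $q\cdot a\neq\emptyset$ for all $q\in Q$, $a\in\Sigma$. A poNFA is an NFA whose reachability relation ($p\le q$ iff $q\in p\cdot w$ for some word $w$) is a partial order; an rpoNFA is a poNFA such that for every state $q$ and letter $a$, $q\in q\cdot a$ implies $q\cdot a=\{q\}$. A path is simple if all its states are pairwise distinct; $\mathrm{depth}(\mathcal{A})$ is the number of input symbols on a longest simple path of $\mathcal{A}$ starting in an initial state. $\mathrm{sub}_k(v)$ is the set of subsequences (scattered subwords) of $v$ of length at most $k$; $u\sim_k v$ iff $\mathrm{sub}_k(u)=\mathrm{sub}_k(v)$; $x\sim^{\mathcal{R}}_k y$ iff every prefix of $x$ is $\sim_k$-equivalent to some prefix of $y$ and every prefix of $y$ is $\sim_k$-equivalent to some prefix of $x$. A language is $k$-$\mathcal{R}$-trivial if it is a union of $\sim^{\mathcal{R}}_k$-classes. *)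

(* Defs.v *)
From mathcomp Require Import all_boot.
Set Implicit Arguments. Unset Strict Implicit. Unset Printing Implicit Defensive.

Section NFA.
Variables (Q Sigma : finType) (delta : Q -> Sigma -> {set Q}).

Definition dstar (S : {set Q}) (w : seq Sigma) : {set Q} :=
  foldl (fun (S : {set Q}) a => \bigcup_(q in S) delta q a) S w.

Definition dst (p : Q) (w : seq Sigma) : {set Q} := dstar [set p] w.

Definition complete : Prop := forall q a, delta q a != set0.

Definition reach (p q : Q) : Prop := exists w, q \in dst p w.

(* reachability is always reflexive and transitive; being a partial order
   amounts to antisymmetry, which we write out together with the rest *)
Definition is_partial_order (R : Q -> Q -> Prop) : Prop :=
  (forall p, R p p) /\ (forall p q r, R p q -> R q r -> R p r) /\
  (forall p q, R p q -> R q p -> p = q).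

Definition poNFA : Prop := is_partial_order reach.

Definition rpoNFA : Prop :=
  poNFA /\ forall q a, q \in delta q a -> delta q a = [set q].

Definition accepts (I F : {set Q}) (w : seq Sigma) : bool :=
  dstar I w :&: F != set0.

(* a simple path with n input symbols starting in an initial state:
   states qs_0 ... qs_n pairwise distinct, letters w_0 ... w_{n-1},
   qs_{i+1} in qs_i . w_i *)
Definition has_simple_path (I : {set Q}) (n : nat) : bool :=
  [exists qs : n.+1.-tuple Q, exists w : n.-tuple Sigma,
     [&& tnth qs ord0 \in I, uniq qs &
         [forall i : 'I_n,
            tnth qs (lift ord0 i) \in delta (tnth qs (widen_ord (leqnSn n) i)) (tnth w i)]]].

(* a simple path has at most #|Q| states, hence fewer than #|Q| symbols *)
Definition depth (I : {set Q}) : nat :=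
  \max_(n < #|Q|) (if has_simple_path I n then val n else 0).

End NFA.

(* sub_k(v) = sub_k(u), written out: same subsequences of length <= k *)
Definition simk (Sigma : eqType) (k : nat) (u v : seq Sigma) : Prop :=
  forall x : seq Sigma, size x <= k -> subseq x u = subseq x v.

Definition simRk (Sigma : eqType) (k : nat) (x y : seq Sigma) : Prop :=
  (forall i, exists j, simk k (take i x) (take j y)) /\
  (forall j, exists i, simk k (take j y) (take i x)).

(* a language is a union of ~R_k classes: closed under ~R_k *)
Definition k_R_trivial (Sigma : eqType) (k : nat) (L : pred (seq Sigma)) : Prop :=
  forall x y, simRk k x y -> L x = L y.

(* Main.v *)
Require Import Defs.
From mathcomp Require Import all_boot.
Set Implicit Arguments. Unset Strict Implicit. Unset Printing Implicit Defensive.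

Section Words.
Variable T : eqType.

Lemma decomp (P : pred T) x :
  all P x \/ exists u a v, [/\ x = u ++ a :: v, all P u & ~~ P a].
Proof.
elim: x => [|b x IH]; first by left.
case Pb: (P b); last by right; exists [::], b, x; rewrite Pb.
case: IH => [H|[u [a [v [-> Hu Ha]]]]]; first by left; rewrite /= Pb.
by right; exists (b :: u), a, v; rewrite /= Pb.
Qed.

Lemma subseq_shift (a : T) s u v :
  a \notin u -> subseq (a :: s) (u ++ a :: v) = subseq s v.
Proof.
elim: u => [|c u IH] /=; first by rewrite eqxx.
rewrite inE negb_or => /andP[ac au]; rewrite (negbTE ac); exact: IH.
Qed.

Lemma simk_shift k (a : T) u v u' v' :
  simk k.+1 (u ++ a :: v) (u' ++ a :: v') -> a \notin u -> a \notin u' ->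
  simk k v v'.
Proof.
move=> H au au' s Hs.
rewrite -(subseq_shift s v au) -(subseq_shift s v' au'); exact: H.
Qed.

Lemma take_split (c a : T) u v j :
  c \notin u -> c \in take j (u ++ a :: v) ->
  exists m, take j (u ++ a :: v) = u ++ a :: take m v.
Proof.
move=> cu; rewrite take_cat; case: ifP => hj.
  by move/mem_take => h; rewrite h in cu.
case: (j - size u) => [|m] /=.
  by rewrite cats0 => h; rewrite h in cu.
by move=> _; exists m.
Qed.

Lemma mem_a k (a : T) u z t :
  simk k.+1 (u ++ a :: z) t -> a \in t.
Proof.
move=> H; have := H [:: a] isT; rewrite !sub1seq mem_cat mem_head orbT.
by move <-.
Qed.

Lemma take_mid (a : T) u v i :
  take (size u + i.+1) (u ++ a :: v) = u ++ a :: take i v.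
Proof. by rewrite takeD take_size_cat // drop_size_cat. Qed.

Lemma simR_half k (a : T) u v u' v' :
  (forall i, exists j, simk k.+1 (take i (u ++ a :: v)) (take j (u' ++ a :: v'))) ->
  a \notin u -> a \notin u' ->
  forall i, exists j, simk k (take i v) (take j v').
Proof.
move=> H au au' i.
have [j Hj] := H (size u + i.+1); rewrite take_mid in Hj.
have [m Hm] := take_split au' (mem_a Hj).
rewrite Hm in Hj; exists m; exact: simk_shift Hj au au'.
Qed.

Lemma allD k (P : pred T) x y :
  (forall j, exists i, simk k.+1 (take j y) (take i x)) -> all P x -> all P y.
Proof.
move=> H Ax; have [i Hi] := H (size y); rewrite take_size in Hi.
apply/allP => b yb; have := Hi [:: b] isT; rewrite !sub1seq yb => /esym.
by move/mem_take/(allP Ax).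
Qed.

End Words.

Section Pf.
Variables (Q Sigma : finType) (delta : Q -> Sigma -> {set Q}) (F : {set Q}).

Lemma dstar_cat S u v : dstar delta S (u ++ v) = dstar delta (dstar delta S u) v.
Proof. by rewrite /dstar foldl_cat. Qed.

Lemma dstar_cons S a v :
  dstar delta S (a :: v) = dstar delta (\bigcup_(q in S) delta q a) v.
Proof. by []. Qed.

Lemma dst_cons p a v : dst delta p (a :: v) = dstar delta (delta p a) v.
Proof. by rewrite /dst dstar_cons big_set1. Qed.

Lemma dstar_big v : forall S r,
  (r \in dstar delta S v) = [exists p in S, r \in dst delta p v].
Proof.
elim: v => [|a v IH] S r.
  rewrite /dst /=; apply/idP/existsP => [Hr|[p /andP[pS]]].
    by exists r; rewrite Hr in_set1 eqxx.
  by rewrite in_set1 => /eqP ->.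
rewrite dstar_cons IH; apply/existsP/existsP =>
  [[p /andP[/bigcupP[q qS pq] rp]]|[q /andP[qS]]].
  exists q; rewrite qS dst_cons IH /=; apply/existsP; exists p; by rewrite pq.
rewrite dst_cons IH => /existsP[p /andP[pq rp]]; exists p; rewrite rp andbT.
by apply/bigcupP; exists q.
Qed.

Lemma acc_big S v :
  (dstar delta S v :&: F != set0) = [exists p in S, dst delta p v :&: F != set0].
Proof.
apply/set0Pn/existsP => [[r /setIP[rS rF]]|[p /andP[pS /set0Pn[r /setIP[rp rF]]]]].
  move: rS; rewrite dstar_big => /existsP[p /andP[pS rp]]; exists p; rewrite pS.
  by apply/set0Pn; exists r; rewrite inE rp.
exists r; rewrite inE rF andbT dstar_big; apply/existsP; exists p; by rewrite pS.
Qed.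

Fixpoint spath (p : Q) (qs : seq Q) (w : seq Sigma) : bool :=
  match qs, w with
  | [::], [::] => true
  | q :: qs', a :: w' => (q \in delta p a) && spath q qs' w'
  | _, _ => false
  end.

Lemma spath_size p qs w : spath p qs w -> size qs = size w.
Proof. by elim: qs p w => [|q qs IH] p [|a w] //= /andP[_ /IH ->]. Qed.

Lemma spath_nth d b p qs w i : spath p qs w -> i < size w ->
  nth d qs i \in delta (nth d (p :: qs) i) (nth b w i).
Proof.
elim: qs p w i => [|q qs IH] p [|a w] [|i] //= /andP[pq H] Hi //.
exact: IH H Hi.
Qed.

Hypothesis Hc : complete delta.
Hypothesis Hr : rpoNFA delta.

Lemma reach_refl p : reach delta p p.
Proof. by exists [::]; rewrite /dst /= in_set1. Qed.

Lemma reach_step p q a : q \in delta p a -> reach delta p q.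
Proof. by move=> h; exists [:: a]; rewrite dst_cons. Qed.

Lemma spath_reach r p qs w : spath p qs w -> r \in p :: qs -> reach delta p r.
Proof.
elim: qs p w => [|q qs IH] p [|a w] //=.
  by rewrite inE => _ /eqP ->; apply: reach_refl.
move=> /andP[pq H]; rewrite inE => /orP[/eqP ->|rq]; first exact: reach_refl.
apply: (proj1 (proj2 (proj1 Hr))) (reach_step pq) (IH _ _ H rq).
Qed.

Lemma dst_loops q u : all (fun a => q \in delta q a) u ->
  dstar delta [set q] u = [set q].
Proof.
elim: u => [|a u IH] // /andP[qa Hu].
have := dst_cons q a u; rewrite /dst => ->; rewrite (proj2 Hr _ _ qa); exact: IH.
Qed.

Definition Hb q k := forall qs w, spath q qs w -> uniq (q :: qs) -> size w <= k.

Lemma Hb_step q a p k : Hb q k.+1 -> q \notin delta q a -> p \in delta q a -> Hb p k.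
Proof.
move=> H nl pq qs w Hs Hu.
have : size (a :: w) <= k.+1; last by [].
apply: (H (p :: qs)); first by rewrite /= pq Hs.
rewrite cons_uniq Hu andbT; apply/negP => qin.
have rpq := spath_reach Hs qin.
have epq := proj2 (proj2 (proj1 Hr)) _ _ rpq (reach_step pq).
by subst p; rewrite pq in nl.
Qed.

Lemma Hb_pos q a k : Hb q k -> q \notin delta q a -> 0 < k.
Proof.
move=> H nl; have /set0Pn[p pq] := Hc q a.
apply: (H [:: p] [:: a]); first by rewrite /= pq.
rewrite /= inE andbT; apply/negP => /eqP e; by subst p; rewrite pq in nl.
Qed.

Definition acc q x := dst delta q x :&: F != set0.

Lemma main k : forall q, Hb q k -> forall x y, simRk k x y -> acc q x = acc q y.
Proof.
elim/ltn_ind: k => k IH q Hq x y [H1 H2].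
pose P : pred Sigma := fun a => q \in delta q a.
case: (decomp P x) => [Ax|[u [a [v [ex Au Pa]]]]];
  case: (decomp P y) => [Ay|[u' [b [v' [ey Au' Pb]]]]].
- by rewrite /acc /dst (dst_loops Ax) (dst_loops Ay).
- have kpos := Hb_pos Hq Pb; case: k IH Hq H1 H2 kpos => // k IH Hq H1 H2 _.
  have := allD H2 Ax; by rewrite ey all_cat /= (negbTE Pb) andbF.
- have kpos := Hb_pos Hq Pa; case: k IH Hq H1 H2 kpos => // k IH Hq H1 H2 _.
  have := allD H1 Ay; by rewrite ex all_cat /= (negbTE Pa) andbF.
have kpos := Hb_pos Hq Pa; case: k IH Hq H1 H2 kpos => // k IH Hq H1 H2 _.
have nu : forall c t, all P t -> ~~ P c -> c \notin t.
  by move=> c t At Pc; apply/negP => /(allP At) h; rewrite h in Pc.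
have eab : a = b.
  have [j Hj] := H2 (size u' + 1).
  rewrite ey takeD take_size_cat // drop_size_cat // in Hj.
  have bj : b \in take j x by have := Hj [:: b] isT; rewrite !sub1seq mem_cat mem_head orbT => <-.
  rewrite ex in Hj bj.
  have [m Hm] := take_split (nu _ _ Au Pb) bj.
  rewrite Hm in Hj.
  have := Hj [:: a] isT; rewrite !sub1seq !mem_cat mem_head orbT.
  rewrite (negbTE (nu _ _ Au' Pa)) /= take0 inE; by move/eqP.
subst b; rewrite ex ey in H1 H2.
have au := nu _ _ Au Pa; have au' := nu _ _ Au' Pa.
have Hv : simRk k v v' := conj (simR_half H1 au au') (simR_half H2 au' au).
rewrite /acc ex ey /dst !dstar_cat (dst_loops Au) (dst_loops Au').
have e : forall z, dstar delta [set q] (a :: z) = dstar delta (delta q a) z.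
  by move=> z; have := dst_cons q a z; rewrite /dst.
rewrite !e !acc_big; apply: eq_existsb => p.
case pS: (p \in delta q a) => //=.
exact: (IH k (ltnSn k) p (Hb_step Hq Pa pS) v v' Hv).
Qed.

End Pf.

Theorem theorem4 (Q Sigma : finType) (delta : Q -> Sigma -> {set Q})
  (I F : {set Q}) :
  complete delta -> rpoNFA delta ->
  k_R_trivial (depth delta I) (accepts delta I F).
Proof.
move=> Hc Hr x y Hxy; rewrite /accepts !acc_big; apply: eq_existsb => q.
case qI: (q \in I) => //=.
apply: (@main Q Sigma delta F Hc Hr _ q _ x y Hxy) => qs w Hs Hu.
have sz := spath_size Hs.
have lt : size w < #|Q|.
  by rewrite -sz -[(size qs).+1]/(size (q :: qs)) -(card_uniqP Hu) max_card.
have hp : has_simple_path delta I (size w).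
  have e : size (q :: qs) == (size w).+1 by rewrite /= sz.
  apply/existsP; exists (Tuple e); apply/existsP; exists (in_tuple w).
  rewrite (tnth_nth q) /= qI /=; move: Hu; rewrite cons_uniq => ->; apply/forallP => i.
  have d : Sigma := tnth (in_tuple w) i.
  rewrite !(tnth_nth q (Tuple e)) (tnth_nth d (in_tuple w)) lift0 /=.
  exact: spath_nth Hs (ltn_ord i).
have := @leq_bigmax _ (fun n : 'I_#|Q| =>
  if has_simple_path delta I n then val n else 0) (Ordinal lt).
by rewrite /= hp.
Qed.
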